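(* Let $\mathcal{H}$ be a Hilbert space, $H\in\mathcal{B}(\mathcal{H})$ a hermitian operator and $P\in\mathcal{B}(\mathcal{H})$ a hermitian projection. Then for all $t\ge0$ and $n\in\mathbb{N}$, $$\Big\|\big(Pe^{-i\frac tnH}\big)^n-e^{-itPHP}P\Big\|_\infty\le\frac1n\Big(t\|H\|_\infty+\frac52t^2\|H\|_\infty^2\Big).$$
   Context: $\|\cdot\|_\infty$ denotes the operator norm on $\mathcal{B}(\mathcal{H})$. A hermitian projection is a bounded operator $P$ with $P^2=P=P^\dagger$. *)

(* Defs.v *)
From HB Require Import structures.
From mathcomp Require Import all_boot all_order all_algebra.
From mathcomp Require Export complex.
From mathcomp Require Import all_classical all_reals all_analysis.

Set Implicit Arguments.
Unset Strict Implicit.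
Unset Printing Implicit Defensive.

Import Order.TTheory GRing.Theory Num.Theory numFieldNormedType.Exports.
Local Open Scope ring_scope.
Local Open Scope complex_scope.
Local Open Scope classical_set_scope.

Record hilbertSpace (R : realType) := HilbertSpace {
  hs_car :> lmodType R[i];
  inner : hs_car -> hs_car -> R[i];
  inner_linear : forall (a : R[i]) (x y z : hs_car),
      inner x (a *: y + z) = a * inner x y + inner x z;
  inner_conj : forall x y : hs_car, inner y x = (inner x y)^*;
  inner_ge0 : forall x : hs_car, 0 <= inner x x;
  inner_eq0 : forall x : hs_car, inner x x = 0 -> x = 0;
  inner_complete : forall u : nat -> hs_car,
      (forall e : R, 0 < e -> exists N : nat, forall m n : nat,
          (N <= m)%N -> (N <= n)%N ->
          Num.sqrt (complex.Re (inner (u m - u n) (u m - u n))) < e) ->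
      exists v : hs_car,
        (fun n => Num.sqrt (complex.Re (inner (u n - v) (u n - v)))) @ \oo
          --> (0 : R)
}.

Section HilbertDefs.
Variables (R : realType) (V : hilbertSpace R).

Definition hnorm (x : V) : R := Num.sqrt (complex.Re (inner x x)).

Definition bounded_op (A : V -> V) : Prop :=
  (forall (a : R[i]) (x y : V), A (a *: x + y) = a *: A x + A y) /\
  exists c : R, forall x : V, hnorm (A x) <= c * hnorm x.

Definition opnorm (A : V -> V) : R :=
  sup [set hnorm (A x) | x in [set x : V | hnorm x <= 1]].

Definition hermitian_op (A : V -> V) : Prop :=
  bounded_op A /\ forall x y : V, inner (A x) y = inner x (A y).

Definition hprojection (P : V -> V) : Prop :=
  hermitian_op P /\ forall x : V, P (P x) = P x.

Definition hconv (u : nat -> V) (v : V) : Prop :=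
  (fun n => hnorm (u n - v)) @ \oo --> (0 : R).

Definition opexp (A : V -> V) : V -> V := fun x =>
  xget 0 [set v | hconv (fun N => \sum_(k < N) ((k`!)%:R : R[i])^-1 *: iter k A x) v].

End HilbertDefs.

(* Main.v *)
Require Import Defs.
From HB Require Import structures.
From mathcomp Require Import all_boot all_order all_algebra.
From mathcomp Require Import complex.
From mathcomp Require Import all_classical all_reals all_analysis.
Import Order.TTheory GRing.Theory Num.Theory numFieldNormedType.Exports.
Local Open Scope ring_scope.
Local Open Scope complex_scope.
From mathcomp Require Import ring lra.
Open Scope classical_set_scope.

Section Basic.
Variables (R : realType) (V : hilbertSpace R).
Implicit Types (x y z : V) (a b : R[i]).

Lemma inner0r x : inner x 0 = 0.
Proof.
have h := inner_linear 1 x 0 0; rewrite scale1r mul1r addr0 in h.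
by apply: (@addrI _ (inner x 0)); rewrite addr0 -h.
Qed.

Lemma innerDr x y z : inner x (y + z) = inner x y + inner x z.
Proof. by rewrite -[y]scale1r inner_linear mul1r scale1r. Qed.

Lemma innerZr x a y : inner x (a *: y) = a * inner x y.
Proof. by rewrite -[a *: y]addr0 inner_linear inner0r addr0. Qed.

Lemma innerDl x y z : inner (y + z) x = inner y x + inner z x.
Proof. by rewrite inner_conj innerDr rmorphD /= -!inner_conj. Qed.

Lemma innerZl x a y : inner (a *: y) x = a^* * inner y x.
Proof. by rewrite inner_conj innerZr rmorphM /= -!inner_conj. Qed.

Lemma inner0l x : inner 0 x = 0.
Proof. by rewrite inner_conj inner0r conjc0. Qed.

Lemma innerNr x y : inner x (- y) = - inner x y.
Proof. by rewrite -scaleN1r innerZr mulN1r. Qed.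

Lemma innerNl x y : inner (- y) x = - inner y x.
Proof. by rewrite inner_conj innerNr rmorphN /= -inner_conj. Qed.

Definition ip x y := complex.Re (inner x y).

Lemma ipC x y : ip x y = ip y x.
Proof. by rewrite /ip [in RHS]inner_conj; case: (inner x y). Qed.

Lemma ipDr x y z : ip x (y + z) = ip x y + ip x z.
Proof. by rewrite /ip innerDr; case: (inner x y); case: (inner x z). Qed.
Lemma ipDl x y z : ip (y + z) x = ip y x + ip z x.
Proof. by rewrite /ip innerDl; case: (inner y x); case: (inner z x). Qed.
Lemma ipNr x y : ip x (- y) = - ip x y.
Proof. by rewrite /ip innerNr; case: (inner x y). Qed.
Lemma ipNl x y : ip (- y) x = - ip y x.
Proof. by rewrite /ip innerNl; case: (inner y x). Qed.
Lemma ipBr x y z : ip x (y - z) = ip x y - ip x z.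
Proof. by rewrite ipDr ipNr. Qed.
Lemma ipBl x y z : ip (y - z) x = ip y x - ip z x.
Proof. by rewrite ipDl ipNl. Qed.
Lemma ipZr x (r : R) y : ip x (r%:C *: y) = r * ip x y.
Proof. by rewrite /ip innerZr; case: (inner x y) => p q /=; simpc. Qed.
Lemma ipZl x (r : R) y : ip (r%:C *: y) x = r * ip y x.
Proof. by rewrite ipC ipZr ipC. Qed.
Lemma ip0r x : ip x 0 = 0.
Proof. by rewrite /ip inner0r. Qed.
Lemma ip0l x : ip 0 x = 0.
Proof. by rewrite /ip inner0l. Qed.

Lemma ip_ge0 x : 0 <= ip x x.
Proof. by have := inner_ge0 x; rewrite lecE => /andP[]. Qed.

Lemma innerxx x : inner x x = (ip x x)%:C.
Proof.
have := inner_ge0 x; rewrite /ip lecE; case: (inner x x) => p q /= /andP[/eqP -> _].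
by [].
Qed.

Lemma ip_eq0 x : ip x x = 0 -> x = 0.
Proof. by move=> h; apply: inner_eq0; rewrite innerxx h. Qed.

Lemma hnormE x : hnorm x = Num.sqrt (ip x x).
Proof. by []. Qed.

Lemma hnorm_ge0 x : 0 <= hnorm x.
Proof. exact: sqrtr_ge0. Qed.

Lemma hnorm_sq x : hnorm x ^+ 2 = ip x x.
Proof. by rewrite hnormE sqr_sqrtr // ip_ge0. Qed.

Lemma hnorm_eq0 x : hnorm x = 0 -> x = 0.
Proof. by move=> h; apply: ip_eq0; rewrite -hnorm_sq h expr0n. Qed.

Lemma hnorm0 : hnorm (0 : V) = 0.
Proof. by rewrite hnormE ip0r sqrtr0. Qed.

Lemma ipZZ a x : ip (a *: x) (a *: x) = Normc.normc a ^+ 2 * ip x x.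
Proof.
rewrite /ip innerZl innerZr innerxx /ip.
case: a => p q /=; rewrite sqr_sqrtr ?addr_ge0 ?sqr_ge0 //; simpc.
rewrite /=. ring.
Qed.

Lemma normc_ge0 a : 0 <= Normc.normc a.
Proof. by case: a => p q; exact: sqrtr_ge0. Qed.

Lemma hnormZ a x : hnorm (a *: x) = Normc.normc a * hnorm x.
Proof.
rewrite !hnormE ipZZ sqrtrM ?sqr_ge0 // sqrtr_sqr ger0_norm //; exact: normc_ge0.
Qed.

Lemma hnormN x : hnorm (- x) = hnorm x.
Proof. by rewrite !hnormE ipNl ipNr opprK. Qed.

Lemma CS x y : ip x y ^+ 2 <= ip x x * ip y y.
Proof.
have [y0|ny0] := eqVneq (ip y y) 0.
  by rewrite (ip_eq0 _ y0) !ip0r expr0n mulr0.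
have pos : 0 < ip y y by rewrite lt_def ny0 ip_ge0.
pose s := - ip x y / ip y y.
have h := ip_ge0 (x + s%:C *: y).
rewrite !ipDl !ipDr !ipZl !ipZr (ipC y x) in h.
have e : s * ip y y = - ip x y by rewrite /s mulrAC -mulrA mulfV // mulr1.
have : 0 <= ip x x * ip y y - ip x y ^+ 2.
  have : 0 <= (ip x x + s * ip x y + (s * ip x y + s * (s * ip y y))) * ip y y.
    exact: mulr_ge0 (ltW pos).
  rewrite e. nra.
by rewrite subr_ge0.
Qed.

Lemma CSabs x y : `|ip x y| <= hnorm x * hnorm y.
Proof.
rewrite !hnormE -sqrtrM ?ip_ge0 // -sqrtr_sqr ler_sqrt ?CS //.
by rewrite mulr_ge0 ?ip_ge0.
Qed.

Lemma CSle x y : ip x y <= hnorm x * hnorm y.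
Proof. exact: le_trans (ler_norm _) (CSabs x y). Qed.

Lemma hnormD x y : hnorm (x + y) <= hnorm x + hnorm y.
Proof.
rewrite -(ler_pXn2r (n := 2)) ?nnegrE ?addr_ge0 ?hnorm_ge0 //.
rewrite hnorm_sq !ipDl !ipDr (ipC y x) sqrrD !hnorm_sq.
have := CSle x y. lra.
Qed.

Lemma hnormB x y : hnorm (x - y) <= hnorm x + hnorm y.
Proof. by rewrite -(hnormN y) hnormD. Qed.

Lemma hnormC x y : hnorm (x - y) = hnorm (y - x).
Proof. by rewrite -hnormN opprB. Qed.

Lemma sq_le (p q : R) : 0 <= p -> 0 <= q -> p ^+ 2 <= q ^+ 2 -> p <= q.
Proof. by move=> hp hq; rewrite ler_pXn2r. Qed.

Lemma normcR (r : R) : Normc.normc (r%:C) = `|r|.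
Proof. by rewrite /= expr0n addr0 sqrtr_sqr. Qed.

Definition lin (K : V -> V) := forall a x y, K (a *: x + y) = a *: K x + K y.
Definition bnd (K : V -> V) (L : R) := forall x, hnorm (K x) <= L * hnorm x.

Section Lin.
Variable K : V -> V.
Hypothesis hK : lin K.

Lemma lin0 : K 0 = 0.
Proof.
have h := hK 1 0 0; rewrite !scale1r addr0 in h.
by apply: (@addrI _ (K 0)); rewrite addr0 -h.
Qed.
Lemma linD x y : K (x + y) = K x + K y.
Proof. by have := hK 1 x y; rewrite !scale1r. Qed.
Lemma linZ a x : K (a *: x) = a *: K x.
Proof. by rewrite -[a *: x]addr0 hK lin0 addr0. Qed.
Lemma linN x : K (- x) = - K x.
Proof. by rewrite -scaleN1r linZ scaleN1r. Qed.
Lemma linB x y : K (x - y) = K x - K y.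
Proof. by rewrite linD linN. Qed.
Lemma lin_sum (I : Type) (r : seq I) (Pr : pred I) (f : I -> V) :
  K (\sum_(i <- r | Pr i) f i) = \sum_(i <- r | Pr i) K (f i).
Proof.
elim/big_rec2: _ => [|i y1 y2 _ <-]; [exact: lin0 | exact: linD].
Qed.
End Lin.
Arguments lin0 {K}. Arguments linD {K}. Arguments linZ {K}. Arguments linN {K}. Arguments linB {K}. Arguments lin_sum {K}.

Lemma lin_iter K k : lin K -> lin (iter k K).
Proof.
move=> hK; elim: k => [|k IH] a x y //=.
by rewrite IH hK.
Qed.

Lemma lin_comp K1 K2 : lin K1 -> lin K2 -> lin (fun z => K1 (K2 z)).
Proof. by move=> h1 h2 a x y; rewrite h2 h1. Qed.

Lemma lin_scale K b : lin K -> lin (fun z => b *: K z).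
Proof. by move=> hK a x y; rewrite hK scalerDr !scalerA mulrC. Qed.

Lemma iter_scale K a k x : lin K ->
  iter k (fun z => a *: K z) x = a ^+ k *: iter k K x.
Proof.
move=> hK; elim: k => [|k IH] /=; first by rewrite scale1r.
by rewrite IH (linZ hK) scalerA exprS.
Qed.

Lemma hnorm_sum (I : Type) (r : seq I) (Pr : pred I) (f : I -> V) :
  hnorm (\sum_(i <- r | Pr i) f i) <= \sum_(i <- r | Pr i) hnorm (f i).
Proof.
elim/big_rec2: _ => [|i y1 y2 _ h]; first by rewrite hnorm0.
exact: le_trans (hnormD _ _) (lerD (lexx _) h).
Qed.

Lemma bnd_iter K L k x : bnd K L -> 0 <= L ->
  hnorm (iter k K x) <= L ^+ k * hnorm x.
Proof.
move=> hK hL; elim: k => [|k IH] /=; first by rewrite mul1r.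
apply: le_trans (hK _) _; rewrite exprS -mulrA; exact: ler_wpM2l.
Qed.

Lemma opnorm_le (F : V -> V) (B : R) :
  (forall x, hnorm x <= 1 -> hnorm (F x) <= B) -> opnorm F <= B.
Proof.
move=> h; apply: ge_sup.
  by exists (hnorm (F 0)), 0 => //=; rewrite hnorm0 ler01.
by move=> _ [x hx <-]; exact: h.
Qed.

Lemma opnorm_ub (A : V -> V) : bounded_op A ->
  forall x, hnorm (A x) <= opnorm A * hnorm x.
Proof.
move=> [hA [c hc]] x.
have ub : has_ubound [set hnorm (A x) | x in [set x : V | hnorm x <= 1]].
  exists `|c| => _ [y hy <-]; apply: le_trans (hc y) _.
  apply: le_trans (ler_wpM2r (hnorm_ge0 y) (ler_norm c)) _.
  by rewrite -[leRHS]mulr1 ler_wpM2l.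
have [x0|] := eqVneq (hnorm x) 0.
  by rewrite x0 (hnorm_eq0 _ x0) (lin0 hA) hnorm0 mulr0.
move=> nx0; have px : 0 < hnorm x by rewrite lt_def nx0 hnorm_ge0.
pose y := ((hnorm x)^-1)%:C *: x.
have hy : hnorm y = 1 by rewrite /y hnormZ normcR ger0_norm ?invr_ge0 ?hnorm_ge0 // mulVf.
have : hnorm (A y) <= opnorm A.
  apply: ub_le_sup => //; exists y => //=; by rewrite hy.
rewrite /y (linZ hA) hnormZ normcR ger0_norm ?invr_ge0 ?hnorm_ge0 //.
by rewrite ler_pdivrMl // mulrC.
Qed.

Lemma opnorm_ge0 (A : V -> V) : bounded_op A -> 0 <= opnorm A.
Proof.
move=> hA; have [_ [c hc]] := hA.
have ub : has_ubound [set hnorm (A x) | x in [set x : V | hnorm x <= 1]].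
  exists `|c| => _ [y hy <-]; apply: le_trans (hc y) _.
  apply: le_trans (ler_wpM2r (hnorm_ge0 y) (ler_norm c)) _.
  by rewrite -[leRHS]mulr1 ler_wpM2l.
apply: le_trans (hnorm_ge0 (A 0)) _; apply: ub_le_sup => //.
by exists 0 => //=; rewrite hnorm0 ler01.
Qed.

Section Proj.
Variable P : V -> V.
Hypothesis hP : hprojection P.

Lemma projP x : P (P x) = P x.
Proof. by case: hP. Qed.
Lemma projlin : lin P.
Proof. by case: hP => [[[]]]. Qed.
Lemma projsa x y : inner (P x) y = inner x (P y).
Proof. by case: hP => [[_ ]]. Qed.

Lemma proj_orth x : ip (P x) (x - P x) = 0.
Proof.
have e : ip (P x) (P x) = ip x (P x) by rewrite /ip projsa projP.
by rewrite ipBr e ipC subrr.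
Qed.

Lemma proj_pyth x : ip x x = ip (P x) (P x) + ip (x - P x) (x - P x).
Proof.
have e : x = P x + (x - P x) by rewrite addrC subrK.
have o := proj_orth x; set y := x - P x in e o *.
clearbody y.
rewrite [in LHS]e ipDl !ipDr o (ipC y) o addr0 add0r.
by [].
Qed.

Lemma hnormP x : hnorm (P x) <= hnorm x.
Proof.
apply: sq_le; rewrite ?hnorm_ge0 // !hnorm_sq (proj_pyth x) lerDl; exact: ip_ge0.
Qed.

Lemma hnormPc x : hnorm (x - P x) <= hnorm x.
Proof.
apply: sq_le; rewrite ?hnorm_ge0 // !hnorm_sq (proj_pyth x) lerDr; exact: ip_ge0.
Qed.
End Proj.
Arguments projP {P}. Arguments projlin {P}. Arguments projsa {P}. Arguments hnormP {P}. Arguments hnormPc {P}.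

Lemma two_gt0 : (0 : R) < 2. Proof. lra. Qed.

Lemma hconvP (u : nat -> V) v : hconv u v <->
  forall e : R, 0 < e -> exists N, forall n, (N <= n)%N -> hnorm (u n - v) < e.
Proof.
split.
  move=> /cvgrPdist_lt h e he; have [N _ HN] := h e he; exists N => n hn.
  have := HN n hn; rewrite /= sub0r normrN ger0_norm //; exact: hnorm_ge0.
move=> h; apply/cvgrPdist_lt => e he; have [N HN] := h e he.
exists N => // n /= hn; rewrite sub0r normrN ger0_norm ?hnorm_ge0 //; exact: HN.
Qed.

Lemma rcvgP (u : nat -> R) l : u @ \oo --> l ->
  forall e : R, 0 < e -> exists N, forall n, (N <= n)%N -> `|u n - l| < e.
Proof.
move=> /cvgrPdist_lt h e he; have [N _ HN] := h e he; exists N => n hn.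
rewrite distrC; exact: HN.
Qed.

Lemma le_eps (p q : R) : (forall e, 0 < e -> p <= q + e) -> p <= q.
Proof. by move/ler_addgt0Pr. Qed.

Lemma hconv_le (u : nat -> V) v w (B : R) N0 : hconv u v ->
  (forall n, (N0 <= n)%N -> hnorm (u n - w) <= B) -> hnorm (v - w) <= B.
Proof.
move=> /hconvP hc hB; apply: le_eps => e he.
have [N HN] := hc e he.
have hn : (N0 <= maxn N0 N)%N by rewrite leq_maxl.
have hn' : (N <= maxn N0 N)%N by rewrite leq_maxr.
set n := maxn N0 N in hn hn'.
have -> : v - w = (u n - w) - (u n - v).
  by rewrite opprB [RHS]addrC [RHS]addrA subrK.
apply: le_trans (hnormB _ _) _; apply: lerD; first exact: hB.
exact: ltW (HN n hn').
Qed.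

Lemma hconv_unique (u : nat -> V) v w : hconv u v -> hconv u w -> v = w.
Proof.
move=> hv hw; apply/eqP; rewrite -subr_eq0; apply/eqP; apply: hnorm_eq0.
apply/eqP; rewrite eq_le hnorm_ge0 andbT; apply: le_eps => e he; rewrite add0r.
move/hconvP: hw => /(_ e he) [N HN].
apply: (hconv_le _ _ _ _ N hv) => n hn; exact: ltW (HN n hn).
Qed.

Lemma hconv_lin (u u' : nat -> V) v v' (al : R[i]) :
  hconv u v -> hconv u' v' ->
  hconv (fun n => al *: u n + u' n) (al *: v + v').
Proof.
move=> /hconvP h /hconvP h'; apply/hconvP => e he.
have he2 : 0 < e / 2 / (Normc.normc al + 1).
  by rewrite divr_gt0 ?divr_gt0 // ltr_wpDl ?normc_ge0.
have [N HN] := h _ he2; have [N' HN'] := h' (e / 2) (divr_gt0 he two_gt0).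
exists (maxn N N') => n; rewrite geq_max => /andP[hn hn'].
have -> : al *: u n + u' n - (al *: v + v') = al *: (u n - v) + (u' n - v').
  by rewrite scalerBr opprD addrACA.
apply: le_lt_trans (hnormD _ _) _; rewrite hnormZ (splitr e); apply: ltr_leD; last first.
  exact: ltW (HN' n hn').
have := HN n hn; set d := hnorm _ => hd.
have n0 := normc_ge0 al.
have : Normc.normc al * d <= Normc.normc al * (e / 2 / (Normc.normc al + 1)).
  by apply: ler_wpM2l => //; exact: ltW.
move/le_lt_trans; apply.
have q0 : 0 < e / 2 by rewrite divr_gt0 // two_gt0.
rewrite mulrA ltr_pdivrMr ?ltr_wpDl //; nra.
Qed.

Definition Es (C : R) (N : nat) : R := series (exp_coeff C) N.

Lemma Es_cvg C : Es C @ \oo --> expR C.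
Proof. exact: is_cvg_series_exp_coeff. Qed.

Lemma Es_le C N : 0 <= C -> Es C N <= expR C.
Proof.
move=> hC; apply: (nondecreasing_cvgn_le _ (is_cvg_series_exp_coeff C)).
by apply: nondecreasing_series => n _ _; exact: exp_coeff_ge0.
Qed.

Lemma Es_ge0 C N : 0 <= C -> 0 <= Es C N.
Proof.
move=> hC; rewrite /Es /series /=; apply: sumr_ge0 => i _; exact: exp_coeff_ge0.
Qed.

Lemma Es_mono C n m : 0 <= C -> (n <= m)%N -> Es C n <= Es C m.
Proof.
move=> hC; apply: nondecreasing_series => k _ _; exact: exp_coeff_ge0.
Qed.

Lemma Es_cauchy C : forall e : R, 0 < e ->
  exists N, forall m n, (N <= n)%N -> (n <= m)%N -> Es C m - Es C n < e.
Proof.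
move=> e he; have [N HN] := rcvgP _ _ (Es_cvg C) _ (divr_gt0 he two_gt0).
exists N => m n hn hm.
have : Es C m - Es C n <= `|Es C m - expR C| + `|Es C n - expR C|.
  rewrite (distrC (Es C n)); apply: le_trans _ (ler_normD _ _).
  rewrite addrA subrK; exact: ler_norm.
move/le_lt_trans; apply; rewrite (splitr e); apply: ltrD; apply: HN => //.
exact: leq_trans hm.
Qed.

Lemma normc_natV (n : nat) : Normc.normc ((n%:R : R[i])^-1) = (n%:R)^-1.
Proof.
by rewrite -(rmorph_nat (real_complex R)) -fmorphV normcR ger0_norm // invr_ge0 ler0n.
Qed.

Lemma normcX (a : R[i]) k : Normc.normc (a ^+ k) = Normc.normc a ^+ k.
Proof.
elim: k => [|k IH]; first by rewrite !expr0 Normc.normc1.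
by rewrite !exprS Normc.normcM IH.
Qed.

Definition ps (K : V -> V) (a : R[i]) (x : V) (N : nat) : V :=
  \sum_(k < N) ((k`!)%:R : R[i])^-1 *: iter k (fun z => a *: K z) x.

Definition ex (K : V -> V) (a : R[i]) (x : V) : V := opexp (fun z => a *: K z) x.

Definition cf (a : R[i]) (k : nat) : R[i] := ((k`!)%:R)^-1 * a ^+ k.

Section Exp.
Variables (K : V -> V) (L : R).
Hypotheses (hK : lin K) (hb : bnd K L) (hL : 0 <= L).

Lemma psE a x N : ps K a x N = \sum_(0 <= k < N) cf a k *: iter k K x.
Proof.
rewrite /ps big_mkord; apply: eq_bigr => k _.
by rewrite iter_scale // scalerA.
Qed.

Lemma term_bnd a x k :
  hnorm (cf a k *: iter k K x) <= exp_coeff (Normc.normc a * L) k * hnorm x.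
Proof.
rewrite hnormZ /cf Normc.normcM normc_natV normcX /exp_coeff /=.
have hi := bnd_iter K L k x hb hL.
apply: le_trans (ler_wpM2l _ hi) _.
  by rewrite mulr_ge0 ?invr_ge0 ?ler0n ?exprn_ge0 ?normc_ge0.
rewrite exprMn le_eqVlt; apply/orP; left; apply/eqP; ring.
Qed.

Lemma ps_diff a x n m : (n <= m)%N ->
  hnorm (ps K a x m - ps K a x n) <=
  (Es (Normc.normc a * L) m - Es (Normc.normc a * L) n) * hnorm x.
Proof.
move=> hnm; rewrite !psE /Es /series /=.
rewrite (@big_cat_nat _ _ _ n 0 m _ _ (leq0n n) hnm) /= addrC addrK.
rewrite (@big_cat_nat _ _ _ n 0 m _ _ (leq0n n) hnm) /= addrC addrK.
apply: le_trans (hnorm_sum _ _ _ _) _; rewrite mulr_suml; apply: ler_sum => k _.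
exact: term_bnd.
Qed.

Lemma ps0 a x : ps K a x 0 = 0.
Proof. by rewrite /ps big_ord0. Qed.

Lemma Es0 C : Es C 0 = 0.
Proof. by rewrite /Es /series /= big_geq. Qed.

Lemma small_mul (d e h : R) : 0 <= d -> 0 <= h -> d < e / (h + 1) -> d * h < e.
Proof.
move=> d0 h0; rewrite ltr_pdivlMr ?ltr_wpDl //; nra.
Qed.

Lemma ex_hconv a x : hconv (ps K a x) (ex K a x).
Proof.
suff [v hv] : exists v, hconv (ps K a x) v.
  exact: (xgetPex 0 (P := [set v | hconv (ps K a x) v])) (ex_intro _ v hv).
apply: inner_complete => e he.
set C := Normc.normc a * L.
have C0 : 0 <= C by rewrite mulr_ge0 ?normc_ge0.
have he' : 0 < e / (hnorm x + 1) by rewrite divr_gt0 ?ltr_wpDl ?hnorm_ge0.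
have [N HN] := Es_cauchy C _ he'.
exists N => m n hm hn.
have gen : forall p q, (N <= q)%N -> (q <= p)%N -> hnorm (ps K a x p - ps K a x q) < e.
  move=> p q hq hqp; apply: le_lt_trans (ps_diff _ _ _ _ hqp) _.
  apply: small_mul; rewrite ?hnorm_ge0 ?subr_ge0 ?Es_mono //; exact: HN.
have [hnm|hmn] := leqP n m; first exact: gen.
rewrite -/(hnorm _) hnormC; apply: gen => //; exact: ltnW.
Qed.

Lemma ex_unique a x v : hconv (ps K a x) v -> ex K a x = v.
Proof. move=> h; exact: hconv_unique (ex_hconv a x) h. Qed.

Lemma ps_lin a al x y N :
  ps K a (al *: x + y) N = al *: ps K a x N + ps K a y N.
Proof.
rewrite !psE scaler_sumr -big_split /=; apply: eq_bigr => k _.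
by rewrite (lin_iter _ k hK) !scalerDr !scalerA mulrC.
Qed.

Lemma ex_lin a : lin (ex K a).
Proof.
move=> al x y; apply: ex_unique.
have -> : ps K a (al *: x + y) = (fun n => al *: ps K a x n + ps K a y n).
  by apply/funext => N; exact: ps_lin.
apply: hconv_lin; exact: ex_hconv.
Qed.

Lemma ex_bnd a x : hnorm (ex K a x) <= expR (Normc.normc a * L) * hnorm x.
Proof.
rewrite -[ex K a x]subr0; apply: (hconv_le _ _ _ _ 0 (ex_hconv a x)) => n _.
rewrite -(ps0 a x); apply: le_trans (ps_diff _ _ _ _ (leq0n n)) _.
rewrite Es0 subr0; apply: ler_wpM2r; rewrite ?hnorm_ge0 //.
by apply: Es_le; rewrite mulr_ge0 ?normc_ge0.
Qed.


Lemma tail_geom n : \sum_(2 <= k < n.+2) (2^-1 : R) ^+ k.-1 = 1 - 2^-1 ^+ n.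
Proof.
elim: n => [|n IH]; first by rewrite big_geq // expr0 subrr.
rewrite big_nat_recr //= IH exprS; lra.
Qed.

Lemma fact_ge n : (2 ^ n <= n.+1`!)%N.
Proof.
elim: n => // n IH; rewrite factS expnS; exact: leq_mul.
Qed.

Lemma ec_le (C : R) k : 0 <= C -> C <= 1 -> (2 <= k)%N ->
  exp_coeff C k <= C ^+ 2 * 2^-1 ^+ k.-1.
Proof.
move=> C0 C1; case: k => // -[//|j] _ /=.
apply: ler_pM; rewrite ?exprn_ge0 ?invr_ge0 ?ler0n //.
  rewrite (_ : j.+2 = 2 + j)%N // exprD -[leRHS]mulr1 ler_wpM2l ?exprn_ge0 //.
  exact: exprn_ile1.
rewrite exprVn -natrX lef_pV2 ?posrE ?ltr0n ?expn_gt0 ?fact_gt0 // ler_nat.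
exact: fact_ge.
Qed.

Lemma tail_le (C : R) n : 0 <= C -> C <= 1 -> \sum_(2 <= k < n) exp_coeff C k <= C ^+ 2.
Proof.
move=> C0 C1; case: n => [|[|m]]; try by rewrite big_geq // exprn_ge0.
apply: le_trans (_ : \sum_(2 <= k < m.+2) C ^+ 2 * 2^-1 ^+ k.-1 <= _).
  by apply: ler_sum_nat => k /andP[hk _]; exact: ec_le.
rewrite -mulr_sumr tail_geom -[leRHS]mulr1 ler_wpM2l ?exprn_ge0 //.
Qed.

Lemma ps_head a x n : (2 <= n)%N ->
  ps K a x n = (x + a *: K x) + \sum_(2 <= k < n) cf a k *: iter k K x.
Proof.
move=> hn; rewrite psE (@big_cat_nat _ _ _ 2 0 n _ _ (leq0n 2) hn) /=.
rewrite big_ltn // big_ltn // big_geq // addr0 /cf /= fact0 invr1 !mul1r expr0 scale1r.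
by rewrite expr1.
Qed.

Lemma ex_rem a x : Normc.normc a * L <= 1 ->
  hnorm (ex K a x - (x + a *: K x)) <= (Normc.normc a * L) ^+ 2 * hnorm x.
Proof.
move=> C1; have C0 : 0 <= Normc.normc a * L by rewrite mulr_ge0 ?normc_ge0.
apply: (hconv_le _ _ _ _ 2 (ex_hconv a x)) => n hn.
rewrite ps_head // addrC addKr.
apply: le_trans (hnorm_sum _ _ _ _) _.
apply: le_trans (_ : \sum_(2 <= k < n) exp_coeff (Normc.normc a * L) k * hnorm x <= _).
  by apply: ler_sum => k _; exact: term_bnd.
rewrite -mulr_suml ler_wpM2r ?hnorm_ge0 //; exact: tail_le.
Qed.

Lemma ex0 x : ex K 0 x = x.
Proof.
apply: ex_unique; apply/hconvP => e he; exists 1%N => n hn.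
rewrite psE big_ltn // big1_seq ?addr0.
  by rewrite /cf fact0 invr1 expr0 mul1r scale1r subrr hnorm0.
move=> k /andP[_]; rewrite mem_index_iota => /andP[hk _].
by case: k hk => // k _; rewrite /cf expr0n /= mulr0 scale0r.
Qed.

Lemma tri (M : zmodType) (G : nat -> nat -> M) N :
  \sum_(0 <= m < N) \sum_(0 <= i < m.+1) G (m - i)%N i =
  \sum_(0 <= j < N) \sum_(0 <= i < N - j) G j i.
Proof.
elim: N => [|N IH]; first by rewrite !big_geq.
rewrite [in LHS]big_nat_recr //= IH.
have e1 : \sum_(0 <= j < N.+1) \sum_(0 <= i < N.+1 - j) G j i =
   \sum_(0 <= j < N.+1) (\sum_(0 <= i < N - j) G j i + G j (N - j)%N).
  by apply: eq_big_nat => j /andP[_ hj]; rewrite subSn // big_nat_recr.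
rewrite e1 big_split /= [X in _ = X + _]big_nat_recr //= subnn (@big_geq _ _ _ 0 0) // addr0.
congr (_ + _).
rewrite big_nat_rev /=; apply: eq_big_nat => i /andP[_ hi].
by rewrite add0n subSS subKn.
Qed.

Lemma cauchy_id (F : numFieldType) (M : lmodType F) (a b : F) (w : nat -> M) N :
  \sum_(0 <= m < N) (((m`!)%:R)^-1 * (b + a) ^+ m) *: w m =
  \sum_(0 <= j < N) \sum_(0 <= i < N - j)
     ((((j`!)%:R)^-1 * b ^+ j) * (((i`!)%:R)^-1 * a ^+ i)) *: w (j + i)%N.
Proof.
rewrite -tri; apply: eq_bigr => m _.
rewrite big_mkord exprDn mulr_sumr scaler_suml; apply: eq_bigr => i _.
have hi : (i <= m)%N by rewrite -ltnS ltn_ord.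
rewrite subnK //; congr (_ *: _).
rewrite -(bin_fact hi) !natrM -(mulr_natr (b ^+ (m - i) * a ^+ i)).
have f1 : (i`!%:R : F) != 0 by rewrite pnatr_eq0 -lt0n fact_gt0.
have f2 : ((m - i)`!%:R : F) != 0 by rewrite pnatr_eq0 -lt0n fact_gt0.
have f3 : ('C(m, i)%:R : F) != 0 by rewrite pnatr_eq0 -lt0n bin_gt0.
by field; rewrite f1 f2 f3.
Qed.

Lemma ecE (u : R) m : exp_coeff u m = ((m`!)%:R)^-1 * u ^+ m.
Proof. by rewrite /exp_coeff /= mulrC. Qed.

Lemma Es_prod (al be : R) N :
  Es be N * Es al N - Es (be + al) N =
  \sum_(0 <= j < N) \sum_(N - j <= i < N) exp_coeff be j * exp_coeff al i.
Proof.
have h := cauchy_id _ R^o al be (fun _ => 1) N.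
rewrite /Es /series /= big_distrlr /=.
rewrite (_ : \sum_(0 <= k < N) exp_coeff (be + al) k =
   \sum_(0 <= m < N) ((m`!)%:R^-1 * (be + al) ^+ m) *: (1 : R^o)); last first.
  by apply: eq_bigr => k _; rewrite ecE /GRing.scale /= mulr1.
rewrite h.
rewrite (_ : \sum_(0 <= i < N) _ = \sum_(0 <= i < N)
  (\sum_(0 <= j < N - i) exp_coeff be i * exp_coeff al j +
   \sum_(N - i <= j < N) exp_coeff be i * exp_coeff al j)); last first.
  apply: eq_bigr => j _; exact: big_cat_nat (leq0n _) (leq_subr _ _).
rewrite big_split /= addrC.
have h2 : \sum_(0 <= j < N) \sum_(0 <= i < N - j)
     ((((j`!)%:R)^-1 * be ^+ j) * (((i`!)%:R)^-1 * al ^+ i)) *: (1 : R^o) =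
  \sum_(0 <= j < N) \sum_(0 <= i < N - j) exp_coeff be j * exp_coeff al i.
  apply: eq_bigr => j _; apply: eq_bigr => i _.
  by rewrite !ecE /GRing.scale /= mulr1.
by rewrite h2 addrK.
Qed.

Lemma zmod_id (Z : zmodType) (c d f e : Z) : c - e = -(d - c) + (d - f) + (f - e).
Proof. by rewrite opprB [c - d + _]addrA subrK addrA subrK. Qed.

Lemma psB a u w N : ps K a (u - w) N = ps K a u N - ps K a w N.
Proof.
rewrite (_ : u - w = -1 *: w + u); last by rewrite scaleN1r addrC.
by rewrite ps_lin scaleN1r addrC.
Qed.

Lemma ps_norm a y N : hnorm (ps K a y N) <= expR (Normc.normc a * L) * hnorm y.
Proof.
have := ps_diff a y 0 N (leq0n N); rewrite ps0 subr0 Es0 subr0 => h.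
apply: le_trans h _; apply: ler_wpM2r; rewrite ?hnorm_ge0 //.
by apply: Es_le; rewrite mulr_ge0 ?normc_ge0.
Qed.

Lemma psD2 a b x N : ps K b (ps K a x N) N =
  \sum_(0 <= j < N) \sum_(0 <= i < N) (cf b j * cf a i) *: iter (j + i) K x.
Proof.
rewrite psE; apply: eq_bigr => j _.
rewrite psE (lin_sum (lin_iter _ j hK)) scaler_sumr; apply: eq_bigr => i _.
by rewrite (linZ (lin_iter _ j hK)) -iterD scalerA.
Qed.

Lemma psC a b x N : ps K (a + b) x N =
  \sum_(0 <= j < N) \sum_(0 <= i < N - j) (cf b j * cf a i) *: iter (j + i) K x.
Proof. rewrite psE addrC /cf; exact: cauchy_id. Qed.

Lemma term2_bnd a b x j i :
  hnorm ((cf b j * cf a i) *: iter (j + i) K x) <=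
  exp_coeff (Normc.normc b * L) j * exp_coeff (Normc.normc a * L) i * hnorm x.
Proof.
rewrite hnormZ /cf !Normc.normcM !normc_natV !normcX !ecE.
have hi := bnd_iter K L (j + i) x hb hL.
apply: le_trans (ler_wpM2l _ hi) _.
  by rewrite !mulr_ge0 ?invr_ge0 ?ler0n ?exprn_ge0 ?normc_ge0.
rewrite !exprMn exprD le_eqVlt; apply/orP; left; apply/eqP; ring.
Qed.

Lemma DC_bnd a b x N :
  hnorm (ps K b (ps K a x N) N - ps K (a + b) x N) <=
  (Es (Normc.normc b * L) N * Es (Normc.normc a * L) N
     - Es (Normc.normc b * L + Normc.normc a * L) N) * hnorm x.
Proof.
rewrite psD2 psC Es_prod.
rewrite (_ : \sum_(0 <= j < N) \sum_(0 <= i < N) _ =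
   \sum_(0 <= j < N) (\sum_(0 <= i < N - j) (cf b j * cf a i) *: iter (j + i) K x
    + \sum_(N - j <= i < N) (cf b j * cf a i) *: iter (j + i) K x)); last first.
  apply: eq_bigr => j _; exact: big_cat_nat (leq0n _) (leq_subr _ _).
rewrite big_split /= [X in hnorm X]addrC addKr.
apply: le_trans (hnorm_sum _ _ _ _) _; rewrite mulr_suml; apply: ler_sum => j _.
apply: le_trans (hnorm_sum _ _ _ _) _; rewrite mulr_suml; apply: ler_sum => i _.
exact: term2_bnd.
Qed.

Lemma ex_add a b x : ex K b (ex K a x) = ex K (a + b) x.
Proof.
set y := ex K a x; symmetry; apply: ex_unique; apply/hconvP => e he.
set al := Normc.normc a * L; set be := Normc.normc b * L.
set hx := hnorm x; set M := expR be.
have M0 : 0 < M := expR_gt0 _.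
have e3 : 0 < e / 3 by rewrite divr_gt0 //; lra.
have hx1 : 0 < hx + 1 by rewrite ltr_wpDl ?hnorm_ge0.
have hT : (fun N => Es be N * Es al N - Es (be + al) N) @ \oo -->
    (expR be * expR al - expR (be + al)).
  by apply: cvgB; [apply: cvgM|]; exact: Es_cvg.
rewrite expRD subrr in hT.
have [N1 HN1] := rcvgP _ _ hT _ (divr_gt0 e3 hx1).
have [N2 HN2] := (hconvP _ _).1 (ex_hconv a x) _ (divr_gt0 e3 M0).
have [N3 HN3] := (hconvP _ _).1 (ex_hconv b y) _ e3.
exists (maxn N1 (maxn N2 N3)) => N; rewrite !geq_max => /andP[h1 /andP[h2 h3]].
set D := ps K b (ps K a x N) N; set C := ps K (a + b) x N.
have -> : C - ex K b y = - (D - C) + ps K b (ps K a x N - y) N + (ps K b y N - ex K b y).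
  by rewrite psB -/D (zmod_id _ C D (ps K b y N)).
apply: le_lt_trans (hnormD _ _) _; rewrite -/(hnorm _).
have b1 : hnorm (- (D - C)) < e / 3.
  rewrite hnormN; apply: le_lt_trans (DC_bnd a b x N) _.
  have := HN1 N h1; rewrite /= subr0 => hT1.
  apply: le_lt_trans (ler_wpM2r (hnorm_ge0 x) (ler_norm _)) _.
  by apply: small_mul; rewrite ?normr_ge0 ?hnorm_ge0.
have b2 : hnorm (ps K b (ps K a x N - y) N) < e / 3.
  apply: le_lt_trans (ps_norm _ _ _) _.
  rewrite -/be -/M -(ltr_pdivlMl _ _ M0) [M^-1 * _]mulrC; exact: HN2.
have b3 := HN3 N h3.
have := hnormD (- (D - C)) (ps K b (ps K a x N - y) N).
move: b1 b2 b3; set p := hnorm _; set q := hnorm _; set r := hnorm _; set s := hnorm _.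
move=> b1 b2 b3 hs.
apply: le_lt_trans (lerD hs (lexx _)) _; lra.
Qed.

Lemma ex_iter a n x : ex K (n%:R * a) x = iter n (ex K a) x.
Proof.
elim: n => [|n IH] /=; first by rewrite mul0r ex0.
by rewrite -IH ex_add -addn1 natrD mulrDl mul1r.
Qed.

Lemma inner_suml (I : Type) (r : seq I) (Pr : pred I) (f : I -> V) y :
  inner (\sum_(i <- r | Pr i) f i) y = \sum_(i <- r | Pr i) inner (f i) y.
Proof.
elim/big_rec2: _ => [|i y1 y2 _ <-]; [exact: inner0l | exact: innerDl].
Qed.

Lemma inner_sumr (I : Type) (r : seq I) (Pr : pred I) (f : I -> V) y :
  inner y (\sum_(i <- r | Pr i) f i) = \sum_(i <- r | Pr i) inner y (f i).
Proof.
elim/big_rec2: _ => [|i y1 y2 _ <-]; [exact: inner0r | exact: innerDr].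
Qed.

Section SA.
Hypothesis hsa : forall x y, inner (K x) y = inner x (K y).

Lemma iter_sa k x y : inner (iter k K x) y = inner x (iter k K y).
Proof.
elim: k x y => [//|k IH] x y /=.
by rewrite hsa IH -iterSr iterS.
Qed.

Lemma cf_conj a k : (cf a k)^* = cf a^* k.
Proof.
by rewrite /cf rmorphM /= fmorphV /= rmorph_nat rmorphXn.
Qed.

Lemma ps_adj a x y N : inner (ps K a x N) y = inner x (ps K a^* y N).
Proof.
rewrite !psE inner_suml inner_sumr; apply: eq_bigr => k _.
by rewrite innerZl innerZr iter_sa; congr (_ * _); exact: cf_conj.
Qed.

Lemma ex_adj a x y : ip (ex K a x) y = ip x (ex K a^* y).
Proof.
set d := ip (ex K a x) y - ip x (ex K a^* y).
suff : `|d| <= 0 by rewrite normr_le0 subr_eq0 => /eqP.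
apply: le_eps => e he; rewrite add0r.
have hy1 : 0 < hnorm y + 1 by rewrite ltr_wpDl ?hnorm_ge0.
have hx1 : 0 < hnorm x + 1 by rewrite ltr_wpDl ?hnorm_ge0.
have e2 : 0 < e / 2 by rewrite divr_gt0 //; lra.
have [N1 HN1] := (hconvP _ _).1 (ex_hconv a x) _ (divr_gt0 e2 hy1).
have [N2 HN2] := (hconvP _ _).1 (ex_hconv a^* y) _ (divr_gt0 e2 hx1).
set N := maxn N1 N2.
have h1 := HN1 N (leq_maxl _ _); have h2 := HN2 N (leq_maxr _ _).
have hN : ip (ps K a x N) y = ip x (ps K a^* y N) by rewrite /ip ps_adj.
have -> : d = - ip (ps K a x N - ex K a x) y + ip x (ps K a^* y N - ex K a^* y).
  rewrite /d ipBl ipBr hN; lra.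
apply: le_trans (ler_normD _ _) _; rewrite normrN.
have b1 : `|ip (ps K a x N - ex K a x) y| <= e / 2.
  apply: le_trans (CSabs _ _) _; apply/ltW.
  apply: small_mul; rewrite ?hnorm_ge0 //.
have b2 : `|ip x (ps K a^* y N - ex K a^* y)| <= e / 2.
  apply: le_trans (CSabs _ _) _; apply/ltW; rewrite mulrC.
  apply: small_mul; rewrite ?hnorm_ge0 //.
lra.
Qed.

Lemma ex_unitary a x : a^* = - a -> hnorm (ex K a x) = hnorm x.
Proof.
move=> ha; rewrite !hnormE ex_adj ha ex_add addrN ex0 //.
Qed.

End SA.

Section Inv.
Variable P : V -> V.
Hypotheses (hP : hprojection P) (hKP : forall z, P (K z) = K z).

Lemma ex_inv a x : P x = x -> P (ex K a x) = ex K a x.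
Proof.
move=> hx; set v := ex K a x.
have hPs : forall N, P (ps K a x N) = ps K a x N.
  move=> N; rewrite psE (lin_sum (projlin hP)); apply: eq_bigr => k _.
  rewrite (linZ (projlin hP)); congr (_ *: _).
  by case: k => [|k] //=; rewrite hKP.
apply/eqP; rewrite -subr_eq0; apply/eqP; apply: hnorm_eq0.
apply/eqP; rewrite eq_le hnorm_ge0 andbT; apply: le_eps => e he; rewrite add0r.
have e2 : 0 < e / 2 by rewrite divr_gt0 //; lra.
have [N HN] := (hconvP _ _).1 (ex_hconv a x) _ e2.
have h := HN N (leqnn N).
have -> : P v - v = P (v - ps K a x N) + (ps K a x N - v).
  by rewrite (linB (projlin hP)) hPs addrA subrK.
apply: le_trans (hnormD _ _) _.
apply: le_trans (lerD (hnormP hP _) (lexx _)) _.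
rewrite hnormC; lra.
Qed.

End Inv.

End Exp.

Lemma zmod_id2 (Z : zmodType) (u w s : Z) : u - w = (u - s) - (w - s).
Proof. by rewrite opprB [u - s + _]addrA subrK. Qed.

Lemma zmod_chain (Z : zmodType) (u v w : Z) : u - w = (u - v) + (v - w).
Proof. by rewrite addrA subrK. Qed.

Section Main.
Variables (H P : V -> V).
Hypotheses (hH : hermitian_op H) (hP : hprojection P).
Variables (t : R) (n : nat).
Hypotheses (ht : 0 <= t) (hn : (0 < n)%N).

Let L := opnorm H.
Let HL0 : 0 <= L. Proof. exact: opnorm_ge0 _ hH.1. Qed.
Let Hlin : lin H. Proof. by case: hH => [[]]. Qed.
Let Hbnd : bnd H L. Proof. exact: opnorm_ub _ hH.1. Qed.
Let Hsa : forall x y, inner (H x) y = inner x (H y). Proof. by case: hH. Qed.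
Let Plin : lin P. Proof. exact: projlin hP. Qed.

Definition Kp := fun z => P (H (P z)).
Let Klin : lin Kp. Proof. exact: lin_comp _ _ Plin (lin_comp _ _ Hlin Plin). Qed.
Let Kbnd : bnd Kp L.
Proof.
move=> z; rewrite /Kp; apply: le_trans (hnormP hP _) _.
apply: le_trans (Hbnd _) _; exact: (ler_wpM2l HL0 (hnormP hP z)).
Qed.
Let Ksa : forall x y, inner (Kp x) y = inner x (Kp y).
Proof. by move=> x y; rewrite /Kp projsa // Hsa projsa. Qed.
Let KP : forall z, P (Kp z) = Kp z.
Proof. by move=> z; rewrite /Kp projP. Qed.

Let tau := t / n%:R.
Let a : R[i] := 0 -i* tau.
Let tau0 : 0 <= tau. Proof. by rewrite divr_ge0 ?ler0n. Qed.
Let a_conj : a^* = - a.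
Proof. by apply/eqP; rewrite eq_complex /= oppr0 !eqxx. Qed.
Let a_norm : Normc.normc a = tau.
Proof. by rewrite /a /= expr0n /= add0r sqrrN sqrtr_sqr ger0_norm. Qed.
Let c := tau * L.
Let c0 : 0 <= c. Proof. exact: mulr_ge0. Qed.

Let U_unit y : hnorm (ex H a y) = hnorm y.
Proof. exact: (ex_unitary _ _ Hlin Hbnd HL0 Hsa). Qed.
Let W_unit y : hnorm (ex Kp a y) = hnorm y.
Proof. exact: (ex_unitary _ _ Klin Kbnd HL0 Ksa). Qed.
Let W_inv y : P y = y -> P (ex Kp a y) = ex Kp a y.
Proof. exact: (ex_inv _ _ Klin Kbnd HL0 _ hP KP). Qed.
Let rem_U y : c <= 1 -> hnorm (ex H a y - (y + a *: H y)) <= c ^+ 2 * hnorm y.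
Proof. rewrite /c -a_norm; exact: (ex_rem _ _ Hlin Hbnd HL0). Qed.
Let rem_W y : c <= 1 -> hnorm (ex Kp a y - (y + a *: Kp y)) <= c ^+ 2 * hnorm y.
Proof. rewrite /c -a_norm; exact: (ex_rem _ _ Klin Kbnd HL0). Qed.

Lemma step1 y : P y = y ->
  hnorm (P (ex H a y) - ex Kp a y) <= 5 / 2 * c ^+ 2 * hnorm y.
Proof.
move=> hy; have hy0 := hnorm_ge0 y.
have [hc|hc] := lerP c 1.
  have hs : P (y + a *: H y) = y + a *: Kp y.
    by rewrite (linD Plin) (linZ Plin) /Kp hy.
  rewrite (zmod_id2 _ _ _ (y + a *: Kp y)) -hs -(linB Plin) hs.
  apply: le_trans (hnormB _ _) _.
  have := rem_U y hc; have := rem_W y hc; have := hnormP hP (ex H a y - (y + a *: H y)).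
  have : 0 <= c ^+ 2 * hnorm y by rewrite mulr_ge0 ?exprn_ge0.
  lra.
apply: le_trans (hnormB _ _) _.
apply: le_trans (lerD (hnormP hP _) (lexx _)) _.
rewrite U_unit W_unit.
have : 1 <= c ^+ 2 by rewrite exprn_ege1 // ltW.
nra.
Qed.

Lemma step2 x :
  hnorm (P (ex H a x) - ex Kp a (P x)) <= (c + 5 / 2 * c ^+ 2) * hnorm x.
Proof.
have hx0 := hnorm_ge0 x.
have hPx := hnormP hP x.
have [hc|hc] := lerP c 1.
  set s := P x + a *: Kp (P x).
  rewrite (zmod_id2 _ _ _ s) [P (ex H a x) - s](zmod_chain _ _ (P (x + a *: H x))) -(linB Plin).
  have e1 : P (x + a *: H x) - s = a *: P (H (x - P x)).
    rewrite /s /Kp (linD Plin) (linZ Plin) projP // opprD addrACA subrr add0r.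
    by rewrite -scalerBr -(linB Plin) -(linB Hlin).
  rewrite e1.
  have b1 := hnormP hP (ex H a x - (x + a *: H x)).
  have b2 := rem_U x hc.
  have b3 := rem_W (P x) hc.
  have b4 : hnorm (a *: P (H (x - P x))) <= c * hnorm x.
    rewrite hnormZ a_norm /c -mulrA; apply: (ler_wpM2l tau0).
    apply: le_trans (hnormP hP _) _; apply: le_trans (Hbnd _) _.
    exact: (ler_wpM2l HL0 (hnormPc hP x)).
  apply: le_trans (hnormB _ _) _.
  apply: le_trans (lerD (hnormD _ _) (lexx _)) _.
  have : c ^+ 2 * hnorm (P x) <= c ^+ 2 * hnorm x by rewrite ler_wpM2l ?exprn_ge0.
  have : 0 <= c ^+ 2 * hnorm x by rewrite mulr_ge0 ?exprn_ge0.
  lra.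
apply: le_trans (hnormB _ _) _.
apply: le_trans (lerD (hnormP hP _) (lexx _)) _.
rewrite U_unit W_unit.
have : 1 <= c ^+ 2 by rewrite exprn_ege1 // ltW.
nra.
Qed.

Let PU := fun y => P (ex H a y).
Let PUlin : lin PU.
Proof. exact: lin_comp _ _ Plin (ex_lin _ _ Hlin Hbnd HL0 a). Qed.

Lemma iterW_inv m x : P (iter m (ex Kp a) (P x)) = iter m (ex Kp a) (P x).
Proof.
elim: m => [|m IH] /=; first exact: projP.
exact: W_inv.
Qed.

Lemma iterW_norm m x : hnorm (iter m (ex Kp a) (P x)) = hnorm (P x).
Proof. by elim: m => [|m IH] //=; rewrite W_unit. Qed.

Lemma main_ind m x :
  hnorm (iter m.+1 PU x - iter m.+1 (ex Kp a) (P x)) <=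
  (c + 5 / 2 * c ^+ 2 * m.+1%:R) * hnorm x.
Proof.
have hx0 := hnorm_ge0 x.
elim: m => [|m IH].
  by rewrite /= mulr1; exact: step2.
set A := iter m.+1 PU x; set B := iter m.+1 (ex Kp a) (P x).
rewrite [iter m.+2 _ x]/= [iter m.+2 _ (P x)]/= -/A -/B.
rewrite (zmod_chain _ _ (PU B)) -(linB PUlin).
apply: le_trans (hnormD _ _) _.
have b1 : hnorm (PU (A - B)) <= hnorm (A - B).
  by apply: le_trans (hnormP hP _) _; rewrite U_unit.
have b2 : hnorm (PU B - ex Kp a B) <= 5 / 2 * c ^+ 2 * hnorm x.
  apply: le_trans (step1 _ (iterW_inv _ _)) _.
  rewrite iterW_norm; apply: ler_wpM2l; last exact: hnormP.
  by rewrite mulr_ge0 ?exprn_ge0.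
have e : (m.+2)%:R = (m.+1)%:R + 1 :> R by rewrite -addn1 natrD.
rewrite e.
have : 0 <= c ^+ 2 * hnorm x by rewrite mulr_ge0 ?exprn_ge0.
move: IH; rewrite -/A -/B => IH.
nra.
Qed.

Lemma main_bound x : hnorm x <= 1 ->
  hnorm (iter n PU x - ex Kp (0 -i* t) (P x)) <=
  n%:R^-1 * (t * opnorm H + 5 / 2 * t ^+ 2 * opnorm H ^+ 2).
Proof.
move=> hx1.
have ea : (0 -i* t) = n%:R * a :> R[i].
  rewrite /a /tau -(rmorph_nat (real_complex R)) /=.
  apply/eqP; rewrite eq_complex /= !mul0r !mulr0 subr0 addr0 eqxx /=.
  apply/eqP; rewrite mulrN; congr (- _); rewrite mulrC divfK //.
  by rewrite pnatr_eq0 -lt0n.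
rewrite ea (ex_iter _ _ Klin Kbnd HL0).
have := main_ind n.-1 x; rewrite prednK //.
move/le_trans; apply.
have hn0 : (0 : R) < n%:R by rewrite ltr0n.
have -> : n%:R^-1 * (t * opnorm H + 5 / 2 * t ^+ 2 * opnorm H ^+ 2) =
  c + 5 / 2 * c ^+ 2 * n%:R.
  rewrite /c /tau /L; field; by rewrite gt_eqF.
rewrite -[leRHS]mulr1 ler_wpM2l //.
by rewrite addr_ge0 // !mulr_ge0 ?exprn_ge0 ?ler0n.
Qed.

End Main.
End Basic.

Theorem corollary3p2 (R : realType) (V : hilbertSpace R) (H P : V -> V) :
  hermitian_op H -> hprojection P ->
  forall (t : R) (n : nat), 0 <= t -> (0 < n)%N ->
  opnorm (fun x : V =>
            iter n (fun y => P (opexp (fun z => (0 -i* (t / n%:R)) *: H z) y)) x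
            - opexp (fun z => (0 -i* t) *: P (H (P z))) (P x))
    <= n%:R^-1 * (t * opnorm H + 5 / 2 * t ^+ 2 * opnorm H ^+ 2).
Proof.
move=> hH hP t n ht hn; apply: opnorm_le => x hx.
exact: (main_bound _ _ _ _ hH hP _ _ ht hn _ hx).
Qed.
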